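(* Let $\varepsilon>0$ and $\mathcal{K}_\varepsilon=\{x\in\mathbb{R}^{|\mathcal{A}|}:x_i+\varepsilon\le x_{i+1}\text{ for }i=1,\dots,|\mathcal{A}|-1\}$. Consider the modification of MultiQT in which the forecast is $q_t=\Pi_{\mathcal{K}_\varepsilon}(b_t+\tilde\theta_t)$ and the hidden offsets are updated by $\tilde\theta_{t+1}^{\alpha}=\tilde\theta_t^{\alpha}-\eta(\mathbb{1}\{y_t\le q_t^{\alpha}\}-\alpha)$ for each $\alpha\in\mathcal{A}$. There exist a set of levels $\mathcal{A}$ and a sequence $(y_t,b_t)$ with $|y_t-b_t^{\alpha}|<R$ for all $\alpha,t$ (for some $R>0$) such that for some $\alpha\in\mathcal{A}$, $\lim_{T\to\infty}\frac1T\sum_{t=1}^T\mathbb{1}\{y_t\le q_t^{\alpha}\}\ne\alpha$.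
   Context: $\mathcal{A}=\{\alpha_1<\dots<\alpha_m\}\subset(0,1)$ is a set of quantile levels, $\eta>0$ a learning rate, base forecasts $b_t$ have nondecreasing entries, and $\Pi_C$ denotes Euclidean projection onto a closed convex set $C$. *)

(* Defs.v *)
From Stdlib Require Import Reals Lra.
Open Scope R_scope.

(* Vectors in R^m are represented as functions nat -> R, only indices i < m matter.
   Index i (0-based) corresponds to the (i+1)-th smallest level alpha_{i+1}. *)

Fixpoint sumR (m : nat) (f : nat -> R) : R :=
  match m with
  | O => 0
  | S k => sumR k f + f k
  end.

Definition sqdist (m : nat) (x y : nat -> R) : R :=
  sumR m (fun i => (x i - y i) ^ 2).

Definition in_Keps (m : nat) (eps : R) (x : nat -> R) : Prop :=
  forall i : nat, (i + 1 < m)%nat -> x i + eps <= x (i + 1)%nat.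

(* p is the Euclidean projection of v onto K_eps (the projection exists and
   is unique since K_eps is nonempty closed convex). *)
Definition is_proj_Keps (m : nat) (eps : R) (v p : nat -> R) : Prop :=
  in_Keps m eps p /\
  forall z : nat -> R, in_Keps m eps z -> sqdist m p v <= sqdist m z v.

Definition ind_le (a b : R) : R := if Rle_dec a b then 1 else 0.

(* empirical coverage (1/T) sum_{t=1}^T 1{y_t <= q_t^alpha}; times are 0-based,
   so the average over the first T+1 rounds is indexed by T. *)
Definition coverage (y : nat -> R) (q : nat -> nat -> R) (i : nat) (T : nat) : R :=
  sum_f_R0 (fun t => ind_le (y t) (q t i)) T / INR (S T).

(* Main.v *)
Require Import Defs.
From Stdlib Require Import Reals Lra Lia.
Open Scope R_scope.

Lemma proj_key (eps a q0 q1 : R) : 0 < eps -> 0 <= a ->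
  q0 + eps <= q1 ->
  (q0 - a) ^ 2 + (q1 - - a) ^ 2 <= (- eps / 2 - a) ^ 2 + (eps / 2 - - a) ^ 2 ->
  q0 = - eps / 2.
Proof.
  intros He Ha H1 H2.
  set (u := q0 - a). set (w := q1 + a). set (c := eps + 2 * a).
  assert (Hwu : w - u >= c) by (unfold u, w, c; lra).
  assert (H3 : u ^ 2 + w ^ 2 <= c ^ 2 / 2).
  { unfold u, w, c. replace (q1 - - a) with (q1 + a) in H2 by ring.
    replace ((- eps / 2 - a) ^ 2 + (eps / 2 - - a) ^ 2) with ((eps + 2 * a) ^ 2 / 2) in H2 by field.
    lra. }
  assert (Hc : 0 < c) by (unfold c; lra).
  assert (H4 : (w - u) ^ 2 >= c ^ 2) by nra.
  assert (H5 : (u + w) ^ 2 <= 0) by nra.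
  assert (H6 : u + w = 0) by nra.
  assert (H7 : w - u = c) by nra.
  unfold u, w, c in *. lra.
Qed.

Lemma sum_zero (f : nat -> R) (T : nat) : (forall t, f t = 0) -> sum_f_R0 f T = 0.
Proof.
  intros H; induction T; simpl; rewrite ?IHT, H; ring.
Qed.

Theorem proposition14 :
  forall (eps eta : R), 0 < eps -> 0 < eta ->
  exists (m : nat) (alpha : nat -> R) (y : nat -> R) (b : nat -> nat -> R) (R0 : R),
    (1 <= m)%nat /\
    (* levels alpha_0 < ... < alpha_{m-1} in (0,1) *)
    (forall i, (i < m)%nat -> 0 < alpha i < 1) /\
    (forall i, (i + 1 < m)%nat -> alpha i < alpha (i + 1)%nat) /\
    (* base forecasts have nondecreasing entries *)
    (forall t i, (i + 1 < m)%nat -> b t i <= b t (i + 1)%nat) /\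
    (* boundedness *)
    0 < R0 /\
    (forall t i, (i < m)%nat -> Rabs (y t - b t i) < R0) /\
    (* for every run of the modified MultiQT (initial hidden offsets 0) *)
    forall (theta q : nat -> nat -> R),
      (forall i, theta O i = 0) ->
      (forall t, is_proj_Keps m eps (fun i => b t i + theta t i) (q t)) ->
      (forall t i, theta (S t) i = theta t i - eta * (ind_le (y t) (q t i) - alpha i)) ->
      exists i, (i < m)%nat /\ ~ Un_cv (coverage y q i) (alpha i).
Proof.
  intros eps eta Heps Heta.
  exists 2%nat, (fun i => match i with O => 1/4 | _ => 3/4 end),
    (fun _ => 0), (fun _ _ => 0), 1.
  split; [lia|]. split.
  { intros i Hi. destruct i as [|[|]]; lra || lia. }
  split.
  { intros i Hi. destruct i as [|]; [simpl; lra | lia]. }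
  split; [intros; lra|]. split; [lra|]. split.
  { intros; rewrite Rminus_0_r, Rabs_R0; lra. }
  intros theta q H0 Hproj Hupd.
  assert (Hq : forall t a, 0 <= a -> theta t 0%nat = a -> theta t 1%nat = - a ->
            q t 0%nat = - eps / 2 /\ q t 1%nat = eps / 2).
  { intros t a Ha Ht0 Ht1.
    destruct (Hproj t) as [HK Hmin].
    assert (HK0 : q t 0%nat + eps <= q t 1%nat) by (apply (HK 0%nat); lia).
    set (z := fun i : nat => match i with O => - eps / 2 | _ => eps / 2 end).
    assert (Hz : in_Keps 2 eps z).
    { intros i Hi. destruct i; [simpl; lra | lia]. }
    specialize (Hmin z Hz). unfold sqdist in Hmin. simpl in Hmin.
    rewrite Ht0, Ht1 in Hmin.
    assert (E : q t 0%nat = - eps / 2).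
    { apply (proj_key eps a (q t 0%nat) (q t 1%nat)); try lra. }
    split; [exact E|].
    set (u := q t 0%nat - a) in *. set (w := q t 1%nat + a).
    assert (Hw : w ^ 2 <= (eps / 2 + a) ^ 2).
    { unfold w. replace (q t 1%nat - - a) with (q t 1%nat + a) in Hmin by ring.
      unfold u in Hmin. rewrite E in Hmin. lra. }
    assert (Hw2 : w >= eps / 2 + a) by (unfold w; lra).
    assert (w = eps/2 + a) by nra. unfold w in *. lra. }
  assert (Hind : forall t, theta t 0%nat = INR t * eta / 4 /\ theta t 1%nat = - (INR t * eta / 4)).
  { induction t as [|t [IH0 IH1]].
    - rewrite !H0. simpl. split; lra.
    - assert (Ha : 0 <= INR t * eta / 4).
      { pose proof (pos_INR t). nra. }
      destruct (Hq t _ Ha IH0 IH1) as [Q0 Q1].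
      rewrite !Hupd, IH0, IH1, Q0, Q1. rewrite S_INR. unfold ind_le.
      destruct (Rle_dec 0 (- eps / 2)); [lra|].
      destruct (Rle_dec 0 (eps / 2)); [|lra].
      simpl. split; lra. }
  assert (Hq0 : forall t, q t 0%nat = - eps / 2).
  { intros t. destruct (Hind t) as [A B].
    assert (Ha : 0 <= INR t * eta / 4) by (pose proof (pos_INR t); nra).
    exact (proj1 (Hq t _ Ha A B)). }
  exists 0%nat. split; [lia|].
  intros Hcv. destruct (Hcv (1/8)) as [N HN]; [lra|].
  specialize (HN N (Nat.le_refl N)).
  unfold coverage in HN.
  rewrite sum_zero in HN.
  - unfold Rdiv in HN. rewrite Rmult_0_l, R_dist_sym in HN. unfold R_dist in HN.
    rewrite Rminus_0_r, Rabs_right in HN; lra.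
  - intros t. rewrite Hq0. unfold ind_le. destruct (Rle_dec 0 (- eps / 2)); lra.
Qed.
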